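(* Let $N\ge 2$, $h\ge 1$, $\Lambda\ge 1$ be integers, and let $f(X)\in\mathbb{F}_2[X]$ be a nonzero polynomial of degree at most $N h\Lambda\lceil\log N\rceil$ (logarithms base $2$). Consider the following procedure: for $i=1,2,\dots,\lceil\log N\rceil$ in order, compute $r_i(X)=f(X)\bmod (X^{2^i}+X)$, stopping at the first index $j$ for which $r_j(X)\neq 0$ (assume such $j\le\lceil\log N\rceil$ exists); then, with $\tilde f(X)=f(X)\bmod(X^{2^j}+X)$, divide $\tilde f(X)$ by the irreducible polynomials of degree $j$ over $\mathbb{F}_2$ until one is found that is coprime with $\tilde f(X)$ (equivalently with $f(X)$), and output it. The total complexity (number of field operations) of this procedure is at most $O(N^2)+O\big(hN(\log N)^2\Lambda\big)$.
   Context: All polynomials are over $\mathbb{F}_2$. Division of two polynomials, one of degree $w$, is assumed to cost $O(w\log w)$ operations. For each $i$, $X^{2^i}+X$ is the product of all irreducible binary polynomials whose degree divides $i$. *)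

(* Defs.v *)
From HB Require Import structures.
From mathcomp Require Import all_boot all_order all_algebra.
Set Implicit Arguments. Unset Strict Implicit. Unset Printing Implicit Defensive.
Import GRing.Theory.
Local Open Scope ring_scope.

Notation F2 := 'F_2.

Definition weight (q : {poly F2}) : nat := count (fun c => c != 0) q.

(* Schoolbook long division of p by q, returning (remainder, cost).
   Each elimination step  p <- p - (lc p / lc q) X^k q  costs
   weight q field operations (one per nonzero coefficient of q).
   With fuel >= size p the remainder is exactly p %% q. *)
Fixpoint sdiv (fuel : nat) (p q : {poly F2}) : {poly F2} * nat :=
  match fuel with
  | 0 => (p, 0%N)
  | n.+1 =>
      if (size p < size q)%N then (p, 0%N)
      else let: (r, c) :=
             sdiv n (p - (lead_coef p / lead_coef q) *: ('X^(size p - size q) * q)) q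
           in (r, (c + weight q)%N)
  end.

Definition modc (p q : {poly F2}) : {poly F2} * nat := sdiv (size p) p q.

Definition binom2 (i : nat) : {poly F2} := 'X^(2 ^ i)%N + 'X.

Fixpoint phase1 (f : {poly F2}) (i fuel : nat) : option (nat * {poly F2}) * nat :=
  match fuel with
  | 0 => (None, 0%N)
  | n.+1 =>
      let: (r, c) := modc f (binom2 i) in
      if r != 0 then (Some (i, r), c)
      else let: (o, c') := phase1 f i.+1 n in (o, (c + c')%N)
  end.

(* Phase 2: divide ft by the polynomials of s in order, stopping at the
   first g with nonzero remainder (i.e. coprime with ft, g irreducible). *)
Fixpoint phase2 (ft : {poly F2}) (s : seq {poly F2}) : option {poly F2} * nat :=
  match s with
  | [::] => (None, 0%N)
  | g :: s' =>
      let: (r, c) := modc ft g in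
      if r != 0 then (Some g, c)
      else let: (o, c') := phase2 ft s' in (o, (c + c')%N)
  end.

(* The whole procedure, for L = ceil(log2 N) and an enumeration
   irr j of the irreducible polynomials of degree j. Returns (output, cost). *)
Definition procedure (L : nat) (f : {poly F2}) (irr : nat -> seq {poly F2})
  : option {poly F2} * nat :=
  let: (o, c1) := phase1 f 1 L in
  match o with
  | None => (None, c1)
  | Some (j, ft) => let: (o2, c2) := phase2 ft (irr j) in (o2, (c1 + c2)%N)
  end.

(* Main.v *)
Require Import Defs.
From HB Require Import structures.
From mathcomp Require Import all_boot all_order all_algebra.
From mathcomp Require Import zify.
Import GRing.Theory.
Local Open Scope ring_scope.

Lemma F2_neq0 (x : F2) : x != 0 -> x = 1.
Proof. by case: x => [[|[|m]] //= Hm] _; apply/val_inj. Qed.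

Lemma sdiv_step_size (p q : {poly F2}) : q != 0 -> (size q <= size p)%N ->
  (size (p - (lead_coef p / lead_coef q) *: ('X^(size p - size q) * q))%R < size p)%N.
Proof.
move=> q0 le.
have p0 : p != 0 by rewrite -size_poly_gt0 (leq_trans _ le) // size_poly_gt0.
set m := _ *: _.
have a0 : lead_coef p / lead_coef q != 0.
  by rewrite mulf_neq0 ?invr_eq0 ?lead_coef_eq0.
have sm : size m = size p.
  by rewrite /m size_scale // mulrC size_mulXn // subnK.
have lm : lead_coef m = lead_coef p.
  by rewrite /m lead_coefZ lead_coefM lead_coefXn mul1r -mulrA mulVf ?mulr1 ?lead_coef_eq0.
have sp := polySpred p0.
rewrite [X in (_ < X)%N]sp ltnS; apply/leq_sizeP => j hj.
rewrite coefB; case: (ltngtP j (size p).-1) => h.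
- by rewrite ltnNge hj in h.
- have hj' : (size p <= j)%N by rewrite sp.
  by rewrite !nth_default ?sm // subrr.
- by rewrite h -[p`_ _]/(lead_coef p) -lm lead_coefE sm subrr.
Qed.

Lemma sdiv_cost n p q : ((sdiv n p q).2 <= n * weight q)%N.
Proof.
elim: n p => [|n IH] p //=.
case: ifP => // _.
case E: (sdiv n _ q) => [r c] /=.
have := IH (p - (lead_coef p / lead_coef q) *: ('X^(size p - size q) * q)).
rewrite E /= => h; rewrite mulSn addnC leq_add2l //.
Qed.

Lemma sdiv_dvd n p q : q %| p - (sdiv n p q).1.
Proof.
elim: n p => [|n IH] p /=; first by rewrite subrr dvdp0.
case: ifP => _; first by rewrite subrr dvdp0.
set p' := (p - _ *: _).
case E: (sdiv n p' q) => [r c] /=.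
have := IH p'; rewrite E /= => h.
have -> : p - r = (p - p') + (p' - r) by rewrite addrA subrK.
apply: dvdp_add => //.
by rewrite /p' opprB addrC subrK scalerAl dvdp_mulIr.
Qed.

Lemma sdiv_size n (p q : {poly F2}) : q != 0 -> (size p < n + size q)%N -> (size (sdiv n p q).1 < size q)%N.
Proof.
move=> q0; elim: n p => [|n IH] p /=; first by [].
case: ifP => // /negbT; rewrite -leqNgt => le h.
have := sdiv_step_size _ _ q0 le.
set p' := (p - _) => hs.
case E: (sdiv n p' q) => [r c] /=.
have := IH p'; rewrite E /=; apply.
by apply: (leq_trans hs); rewrite -ltnS -addSn.
Qed.

Lemma weight_size q : (weight q <= size q)%N.
Proof. exact: count_size. Qed.

Lemma weight_binom2 i : (weight (binom2 i) <= 2)%N.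
Proof.
rewrite /weight -[X in count _ X](mkseq_nth 0) /mkseq count_map.
apply: (@leq_trans (count (predU (pred1 1%N) (pred1 (2 ^ i)%N)) (iota 0 (size (binom2 i))))).
  apply: sub_count => k /=; rewrite /binom2 coefD coefXn coefX.
  by case: (k == 1)%N; case: (k == 2 ^ i)%N; rewrite ?addr0 ?eqxx.
rewrite -[X in (_ <= X)%N]/(1 + 1)%N.
apply: (@leq_trans (count (pred1 1%N) (iota 0 (size (binom2 i))) + count (pred1 (2 ^ i)%N) (iota 0 (size (binom2 i))))%N).
  by rewrite -count_predUI leq_addr.
by apply: leq_add; rewrite count_uniq_mem ?iota_uniq // leq_b1.
Qed.

Lemma binom2_neq0 j : (1 <= j)%N -> binom2 j != 0.
Proof.
move=> j1; apply/eqP => /(congr1 (fun p : {poly F2} => p`_(2 ^ j))).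
rewrite coef0 /binom2 coefD coefXn coefX eqxx.
have : (2 ^ j != 1)%N by rewrite -(expn0 2) eqn_exp2l //; lia.
by move/negbTE => ->; rewrite addr0 => /eqP; rewrite oner_eq0.
Qed.

Lemma size_binom2 j : (size (binom2 j) <= (2 ^ j).+1)%N.
Proof.
rewrite /binom2 (leq_trans (size_add _ _)) // size_polyXn size_polyX geq_max leqnn /=.
by rewrite ltnS expn_gt0.
Qed.

Lemma modc_cost p q : ((modc p q).2 <= size p * weight q)%N.
Proof. exact: sdiv_cost. Qed.

Lemma phase1_cost f i fuel : ((phase1 f i fuel).2 <= fuel * (2 * size f))%N.
Proof.
elim: fuel i => [|n IH] i //=.
have hc := modc_cost f (binom2 i).
have hw := weight_binom2 i.
case E: (modc f (binom2 i)) => [r c]; rewrite E /= in hc.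
have hc' : (c <= 2 * size f)%N by rewrite (leq_trans hc) // mulnC leq_mul2r hw orbT.
case: ifP => _ /=; first by rewrite (leq_trans hc') // leq_addr.
case E2: (phase1 f i.+1 n) => [o c'] /=.
have := IH i.+1; rewrite E2 /= => h.
by rewrite mulSn leq_add.
Qed.

Lemma phase1_some f i fuel j r c : (1 <= i)%N -> phase1 f i fuel = (Some (j, r), c) ->
  [/\ (i <= j)%N, (j < i + fuel)%N, r != 0 & (size r <= 2 ^ j)%N].
Proof.
elim: fuel i c => [|n IH] i c //= i1.
case E: (modc f (binom2 i)) => [r' c0].
case: ifP => hr.
  case=> <- <- _; split => //; first by rewrite addnS ltnS leq_addr.
  have := sdiv_size (size f) f (binom2 i) (@binom2_neq0 i i1).
  rewrite /modc in E; rewrite E /= => h; rewrite -ltnS; apply: (leq_trans (h _)).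
    by rewrite -[X in (X < _)%N]addn0 ltn_add2l lt0n size_poly_eq0 (@binom2_neq0 i i1).
  exact: size_binom2.
case E2: (phase1 f i.+1 n) => [o c'] /= [Eo _]; subst o.
have [] := IH i.+1 c' (leq_trans i1 (leqnSn _)) E2 => h1 h2 h3 h4.
by split => //; [apply: ltnW | rewrite addnS -addSn].
Qed.

Lemma phase2_cost ft s M : (forall g, g \in s -> ((modc ft g).2 <= M)%N) ->
  ((phase2 ft s).2 <= M * (count (fun g => dvdp g ft) s).+1)%N.
Proof.
elim: s => [|g s IH] /= hM; first by [].
have hg := hM g (mem_head _ _).
have hdvd := sdiv_dvd (size ft) ft g.
case E: (modc ft g) => [r c]; rewrite E /= in hg.
case: ifP => hr /=; first by rewrite (leq_trans hg) // leq_pmulr.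
have -> : g %| ft.
  by move: hdvd; rewrite /modc in E; rewrite E /= (eqP (negbFE hr)) subr0.
case E2: (phase2 ft s) => [o c'] /=.
have := IH (fun g' hg' => hM g' (mem_behead (s:=g::s) hg')); rewrite E2 /= => h.
by rewrite add1n mulnS leq_add.
Qed.

Lemma F2_monic (g : {poly F2}) : g != 0 -> g \is monic.
Proof. by move=> g0; rewrite monicE; apply/eqP/F2_neq0; rewrite lead_coef_eq0. Qed.

Lemma irr_coprime (g g' : {poly F2}) : irreducible_poly g -> irreducible_poly g' ->
  g != g' -> coprimep g' g.
Proof.
move=> ig ig' ne.
have [h|h] := irredp_XsubCP ig' (dvdp_gcdl g' g).
  by rewrite coprimep_def size_poly_eq1.
have dg : g' %| g by rewrite -(eqp_dvdl _ h) dvdp_gcdr.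
have sg' : size g' != 1%N by case: ig' => /gtn_eqF ->.
have := ig g' sg' dg.
rewrite eqp_sym eqp_monic ?F2_monic ?irredp_neq0 // => /eqP E.
by rewrite E eqxx in ne.
Qed.

Lemma irr_div_count ft (t : seq {poly F2}) j : ft != 0 -> uniq t ->
  (forall g, g \in t -> [/\ irreducible_poly g, size g = j.+1 & g %| ft]) ->
  (size t * j <= (size ft).-1)%N.
Proof.
elim: t ft => [|g t IH] ft //= ft0 /andP [gt ut] ht.
have [ig sg dg] := ht g (mem_head _ _).
have g0 := irredp_neq0 ig.
set ft' := ft %/ g.
have Eft : ft = ft' * g by rewrite divpK.
have ft'0 : ft' != 0 by apply: contraNneq ft0 => e; rewrite Eft e mul0r.
have h := IH ft' ft'0 ut.
have : (size t * j <= (size ft').-1)%N.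
  apply: h => g' hg'; have [ig' sg' dg'] := ht g' (mem_behead (s:=g::t) hg').
  split => //.
  have ne : g != g' by apply: contraNneq gt => ->.
  by rewrite -(Gauss_dvdpl _ (irr_coprime _ _ ig ig' ne)) -Eft.
rewrite Eft size_mul // sg mulSn => h'.
have : (0 < size ft')%N by rewrite size_poly_gt0.
rewrite addnS /=.
move: h'; move: (size ft') (size t) => a b; lia.
Qed.

Theorem proposition1 :
  exists C : nat,
  forall (N h Lam : nat) (f : {poly F2}) (irr : nat -> seq {poly F2}),
    (2 <= N)%N -> (1 <= h)%N -> (1 <= Lam)%N ->
    f != 0 ->
    ((size f).-1 <= N * h * Lam * up_log 2 N)%N ->
    (forall j, uniq (irr j) /\
       (forall g : {poly F2}, g \in irr j <-> (irreducible_poly g /\ size g = j.+1))) ->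
    (exists i : nat, [/\ (1 <= i)%N, (i <= up_log 2 N)%N & f %% binom2 i != 0]) ->
    ((procedure (up_log 2 N) f irr).2
       <= C * (N ^ 2 + h * N * (up_log 2 N) ^ 2 * Lam))%N.
Proof.
exists 14%N => N h Lam f irr N2 h1 L1 f0 hsf hirr _.
set L := up_log 2 N.
have L0 : (0 < L)%N by rewrite up_log_gt0 N2.
have hL : (2 ^ L <= 2 * N)%N.
  have := @up_log_gtn 2 N isT N2; rewrite -/L.
  by rewrite -{2}(prednK L0) expnS => h'; rewrite leq_mul2l /= ltnW.
have LL : (L < 2 ^ L)%N by apply: ltn_expl.
have sf : (size f <= N * h * Lam * L + 1)%N by lia.
have hc1 := phase1_cost f 1 L.
have c1b : ((phase1 f 1 L).2 <= 2 * (h * N * L ^ 2 * Lam) + 2 * N ^ 2)%N.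
  apply: (leq_trans hc1).
  have : (L * (2 * size f) <= L * (2 * (N * h * Lam * L + 1)))%N.
    by rewrite leq_mul2l leq_mul2l sf !orbT.
  move/leq_trans; apply.
  have : (L <= N ^ 2)%N.
    apply: (leq_trans (ltnW LL)); apply: (leq_trans hL).
    by rewrite expnS expn1 leq_mul2r N2 orbT.
  move: (N ^ 2)%N => M hM.
  rewrite expnS expn1; nia.
rewrite /procedure.
case E1: (phase1 f 1 L) => [o c1]; rewrite E1 /= in c1b.
case: o E1 => [[j ft]|] E1; last first.
  by rewrite (leq_trans c1b) // mulnDr addnC leq_add // leq_mul2r ?orbT.
have [j1 jL ft0 sft] := phase1_some f 1 L j ft c1 (leqnn _) E1.
have [ui memi] := hirr j.
set M := (2 ^ j * j.+1)%N.
have hM : forall g, g \in irr j -> ((modc ft g).2 <= M)%N.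
  move=> g /memi [_ sg]; apply: (leq_trans (modc_cost _ _)).
  by rewrite leq_mul // -sg weight_size.
have hc2 := phase2_cost ft (irr j) M hM.
set k := count _ _ in hc2.
have hk : (k * j <= (2 ^ j).-1)%N.
  rewrite /k -size_filter; apply: (@leq_trans (size ft).-1); last by rewrite -!subn1 leq_sub2r.
  apply: irr_div_count => //; first exact: filter_uniq.
  move=> g; rewrite mem_filter => /andP [dg /memi [ig sg]]; by split.
have jP : (j < 2 ^ j)%N by apply: ltn_expl.
have PN : (2 ^ j <= 2 * N)%N.
  by apply: (leq_trans _ hL); rewrite leq_pexp2l //; lia.
case E2: (phase2 ft (irr j)) => [o2 c2]; rewrite E2 /= in hc2 *.
rewrite /M in hc2; clearbody k.
move: hk jP PN hc2 c1b j1; move: (2 ^ j)%N => P hk jP PN hc2 c1b j1.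
have kk : (k <= k * j)%N by rewrite leq_pmulr.
have h3 : (j.+1 * k.+1 <= 3 * P)%N by nia.
have h4 : (c2 <= 12 * N ^ 2)%N.
  apply: (leq_trans hc2); rewrite -mulnA.
  apply: (@leq_trans (P * (3 * P))); first by rewrite leq_mul2l h3 orbT.
  rewrite expnS expn1; nia.
move: (h * N * L ^ 2 * Lam)%N (N ^ 2)%N c1b h4 => X Y; lia.
Qed.
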